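(* Let $\mathbb{F}$ be an algebraically closed field with $\mathrm{char}\,\mathbb{F}=2$. Let $\underline{a}=(a_1,0,\ldots,0)\in\mathbb{M}^n$ with $a_1\in\{1_{\mathbf{O}},e_1\}$, and let $\underline{b}\in\mathbb{M}^n$ be such that $\dim\mathrm{alg}(\underline{b})\le1$ and $f(\underline{a})=f(\underline{b})$ for all $f\in S_n^{(2)}$. Then ${\rm G}_2\underline{a}={\rm G}_2\underline{b}$.
   Context: The split octonion algebra $\mathbf{O}$ is the 8-dimensional $\mathbb{F}$-vector space of formal matrices $a=\begin{pmatrix}\alpha&\mathbf{u}\\ \mathbf{v}&\beta\end{pmatrix}$ with $\alpha,\beta\in\mathbb{F}$, $\mathbf{u},\mathbf{v}\in\mathbb{F}^3$, with multiplication $\begin{pmatrix}\alpha&\mathbf{u}\\ \mathbf{v}&\beta\end{pmatrix}\begin{pmatrix}\alpha'&\mathbf{u}'\\ \mathbf{v}'&\beta'\end{pmatrix}=\begin{pmatrix}\alpha\alpha'+\mathbf{u}\cdot\mathbf{v}'&\alpha\mathbf{u}'+\beta'\mathbf{u}-\mathbf{v}\times\mathbf{v}'\\ \alpha'\mathbf{v}+\beta\mathbf{v}'+\mathbf{u}\times\mathbf{u}'&\beta\beta'+\mathbf{v}\cdot\mathbf{u}'\end{pmatrix}$ (dot product and cross product on $\mathbb{F}^3$). Trace $\mathrm{tr}(a)=\alpha+\beta$, norm $n(a)=\alpha\beta-\mathbf{u}\cdot\mathbf{v}$. $e_1$ has $\alpha=1$ and all else $0$, $e_2$ has $\beta=1$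 and all else $0$, $1_{\mathbf{O}}=e_1+e_2$. $\mathbb{M}=\left\{\begin{pmatrix}\alpha&(\gamma,0,0)\\(\delta,0,0)&\beta\end{pmatrix}\right\}\subseteq\mathbf{O}$ is the quaternion subalgebra. ${\rm G}_2=\mathrm{Aut}(\mathbf{O})$ acts diagonally on $\mathbf{O}^n$. For $\underline{b}\in\mathbf{O}^n$, $\mathrm{alg}(\underline{b})$ is the (non-unital) $\mathbb{F}$-subalgebra of $\mathbf{O}$ generated by $b_1,\ldots,b_n$. $S_n^{(2)}$ is the set of functions on $\mathbf{O}^n$: $\underline{a}\mapsto n(a_i)$, $\underline{a}\mapsto\mathrm{tr}(a_i)$ ($1\le i\le n$), and $\underline{a}\mapsto\mathrm{tr}(a_ia_j)$ ($1\le i<j\le n$). *)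

(* Defs.v *)
(* Split octonions over a field F, following the paper's
   Zorn vector-matrix model. *)
From HB Require Import structures.
From mathcomp Require Import all_boot all_order all_algebra all_field.
Set Implicit Arguments. Unset Strict Implicit. Unset Printing Implicit Defensive.
Import GRing.Theory.
Local Open Scope ring_scope.

Section Oct.
Variable F : fieldType.

Record v3 := V3 { x1 : F; x2 : F; x3 : F }.

Definition v3add (u w : v3) := V3 (x1 u + x1 w) (x2 u + x2 w) (x3 u + x3 w).
Definition v3scale (c : F) (u : v3) := V3 (c * x1 u) (c * x2 u) (c * x3 u).
Definition v3opp (u : v3) := V3 (- x1 u) (- x2 u) (- x3 u).
Definition v3zero := V3 0 0 0.
Definition dot (u w : v3) : F := x1 u * x1 w + x2 u * x2 w + x3 u * x3 w.
Definition cross (u w : v3) : v3 :=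
  V3 (x2 u * x3 w - x3 u * x2 w)
     (x3 u * x1 w - x1 u * x3 w)
     (x1 u * x2 w - x2 u * x1 w).

(* an octonion (alpha u ; v beta) *)
Record oct := Oct { oal : F; ou : v3; ov : v3; obe : F }.

Definition oadd (a b : oct) :=
  Oct (oal a + oal b) (v3add (ou a) (ou b)) (v3add (ov a) (ov b)) (obe a + obe b).
Definition oscale (c : F) (a : oct) :=
  Oct (c * oal a) (v3scale c (ou a)) (v3scale c (ov a)) (c * obe a).
Definition ozero := Oct 0 v3zero v3zero 0.

Definition omul (a b : oct) : oct :=
  Oct (oal a * oal b + dot (ou a) (ov b))
      (v3add (v3add (v3scale (oal a) (ou b)) (v3scale (obe b) (ou a)))
             (v3opp (cross (ov a) (ov b))))
      (v3add (v3add (v3scale (oal b) (ov a)) (v3scale (obe a) (ov b)))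
             (cross (ou a) (ou b)))
      (obe a * obe b + dot (ov a) (ou b)).

Definition otr (a : oct) : F := oal a + obe a.
Definition onorm (a : oct) : F := oal a * obe a - dot (ou a) (ov a).

Definition e1 : oct := Oct 1 v3zero v3zero 0.
Definition e2 : oct := Oct 0 v3zero v3zero 1.
Definition one_oct : oct := oadd e1 e2.

Definition inM (a : oct) : Prop :=
  x2 (ou a) = 0 /\ x3 (ou a) = 0 /\ x2 (ov a) = 0 /\ x3 (ov a) = 0.

Definition isAut (g : oct -> oct) : Prop :=
  [/\ forall a b, g (oadd a b) = oadd (g a) (g b),
      forall c a, g (oscale c a) = oscale c (g a),
      forall a b, g (omul a b) = omul (g a) (g b)
    & bijective g].

Inductive in_alg (n : nat) (b : 'I_n -> oct) : oct -> Prop :=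
  | alg_gen i : in_alg b (b i)
  | alg_zero : in_alg b ozero
  | alg_add x y : in_alg b x -> in_alg b y -> in_alg b (oadd x y)
  | alg_scale c x : in_alg b x -> in_alg b (oscale c x)
  | alg_mul x y : in_alg b x -> in_alg b y -> in_alg b (omul x y).

Definition dim_alg_le1 (n : nat) (b : 'I_n -> oct) : Prop :=
  exists c : oct, forall x, in_alg b x -> exists t : F, x = oscale t c.

Definition G2orbit (n : nat) (a : 'I_n -> oct) : ('I_n -> oct) -> Prop :=
  fun c => exists g, isAut g /\ c = (fun i => g (a i)).

Definition S2_agree (n : nat) (a b : 'I_n -> oct) : Prop :=
  (forall i, onorm (a i) = onorm (b i)) /\
  (forall i, otr (a i) = otr (b i)) /\
  (forall i j : 'I_n, (i < j)%N -> otr (omul (a i) (a j)) = otr (omul (b i) (b j))).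

End Oct.

(* Main.v *)
Require Import Defs.
From mathcomp Require Import all_boot all_order all_algebra all_field.
From mathcomp Require Import ring.
From Stdlib Require Import FunctionalExtensionality.
Set Implicit Arguments. Unset Strict Implicit. Unset Printing Implicit Defensive.
Import GRing.Theory.
Local Open Scope ring_scope.

Section S.
Variable F : fieldType.

Definition phi (s : F) (a : oct F) : oct F :=
  Oct (oal a + s * x1 (ov a))
      (V3 (x1 (ou a) + s * (obe a - oal a) - s ^+ 2 * x1 (ov a)) (x2 (ou a)) (x3 (ou a)))
      (V3 (x1 (ov a)) (x2 (ov a) + s * x3 (ou a)) (x3 (ov a) - s * x2 (ou a)))
      (obe a - s * x1 (ov a)).
Definition osig (a : oct F) : oct F :=
  Oct (obe a) (v3opp (ov a)) (v3opp (ou a)) (oal a).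

Ltac dest := repeat match goal with
  | a : oct F |- _ => let a0 := fresh "a" in let a1 := fresh "a" in let a2 := fresh "a" in
      let a3 := fresh "a" in let a4 := fresh "a" in let a5 := fresh "a" in
      let a6 := fresh "a" in let a7 := fresh "a" in
      case: a => a0 [a1 a2 a3] [a4 a5 a6] a7 end.
Ltac fin := rewrite /phi /osig /omul /oadd /oscale /v3add /v3scale /v3opp /cross /dot /=;
  congr (Oct _ (V3 _ _ _) (V3 _ _ _) _); ring.

Lemma phi_aut s : isAut (phi s).
Proof.
split.
- move=> a b; dest; fin.
- move=> c a; dest; fin.
- move=> a b; dest; fin.
- exists (phi (- s)) => a; dest; fin.
Qed.

Lemma osig_aut : isAut osig.
Proof.
split.
- move=> a b; dest; fin.
- move=> c a; dest; fin.
- move=> a b; dest; fin.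
- exists osig => a; dest; fin.
Qed.

Lemma comp_aut (g h : oct F -> oct F) : isAut g -> isAut h -> isAut (g \o h).
Proof.
case=> g1 g2 g3 [gi gK Kg]; case=> h1 h2 h3 [hi hK Kh]; split => /=.
- by move=> a b; rewrite h1 g1.
- by move=> c a; rewrite h2 g2.
- by move=> a b; rewrite h3 g3.
- exists (hi \o gi) => a /=; first by rewrite gK hK.
  by rewrite Kh Kg.
Qed.

Lemma inv_aut (g : oct F -> oct F) : isAut g -> exists g', isAut g' /\ cancel g g' /\ cancel g' g.
Proof.
case=> g1 g2 g3 [gi gK Kg]; exists gi; split; last by split.
split.
- by move=> a b; apply: (can_inj gK); rewrite Kg g1 !Kg.
- by move=> c a; apply: (can_inj gK); rewrite Kg g2 !Kg.
- by move=> a b; apply: (can_inj gK); rewrite Kg g3 !Kg.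
- by exists g.
Qed.

Lemma aut0 (g : oct F -> oct F) : isAut g -> g (ozero F) = ozero F.
Proof.
case=> _ g2 _ _.
have -> : ozero F = oscale 0 (ozero F) by rewrite /oscale /v3scale /= !mul0r.
rewrite g2; case: (g _) => a0 [a1 a2 a3] [a4 a5 a6] a7.
by rewrite /oscale /v3scale /= !mul0r.
Qed.

Lemma orbit_eq n (a : 'I_n -> oct F) (g : oct F -> oct F) : isAut g ->
  forall c, G2orbit a c <-> G2orbit (fun i => g (a i)) c.
Proof.
move=> ga c; have [g' [g'a [gK Kg]]] := inv_aut ga; split.
- case=> h [ha ->]; exists (h \o g'); split; first exact: comp_aut.
  by apply: functional_extensionality => i /=; rewrite gK.
- case=> h [ha ->]; exists (h \o g); split; first exact: comp_aut.
  by [].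
Qed.

Lemma otr_scale t (x : oct F) : otr (oscale t x) = t * otr x.
Proof. dest; rewrite /otr /=; ring. Qed.
Lemma onorm_scale t (x : oct F) : onorm (oscale t x) = t ^+ 2 * onorm x.
Proof. dest; rewrite /onorm /dot /=; ring. Qed.
Lemma oscale0 (x : oct F) : oscale 0 x = ozero F.
Proof. dest; rewrite /oscale /v3scale /=; congr (Oct _ (V3 _ _ _) (V3 _ _ _) _); ring. Qed.
Lemma quad (x : oct F) : omul x x = oadd (oscale (otr x) x) (oscale (- onorm x) (one_oct F)).
Proof. dest; rewrite /otr /onorm /one_oct /e1 /e2; fin. Qed.
Lemma eq_by (x y e K : F) : e = 0 -> x - y = e * K -> x = y.
Proof. by move=> -> /eqP; rewrite mul0r subr_eq0 => /eqP. Qed.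
End S.
Lemma key2 (F : fieldType) (al g d be : F) : al + be = 1 -> al * be - g * d = 0 ->
  exists h, isAut h /\ h (e1 F) = Oct al (V3 g 0 0) (V3 d 0 0) be.
Proof.
move=> hs hn; have hbe : be = 1 - al by rewrite -hs; ring.
subst be.
have hn' : al * (1 - al) - g * d = 0 by [].
have [al0|alnz] := eqVneq al 0.
- subst al.
  exists (@osig F \o (@osig F \o @phi F g \o @osig F \o @phi F d)); split; first by repeat (apply: comp_aut || exact: osig_aut || exact: phi_aut).
  rewrite /= /phi /osig /e1 /v3opp /=; congr (Oct _ (V3 _ _ _) (V3 _ _ _) _).
  all: try ring.
  - by apply: (eq_by (K:=-1) hn'); ring.
  - by apply: (eq_by (K:=g) hn'); ring.
  - by apply: (eq_by (K:=1) hn'); ring.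
- exists (@osig F \o @phi F (- d / al) \o @osig F \o @phi F (- g)); split; first by repeat (apply: comp_aut || exact: osig_aut || exact: phi_aut).
  rewrite /= /phi /osig /e1 /v3opp /=; congr (Oct _ (V3 _ _ _) (V3 _ _ _) _).
  all: try ring.
  - by apply: (eq_by (K:=1/al) hn'); field.
  - by apply: (eq_by (K:=d/al^+2) hn'); field.
  - by apply: (eq_by (K:=-1/al) hn'); field.
Qed.

Theorem lemma7p6 (F : closedFieldType) (hchar : 2%N \in [pchar F])
  (n : nat) (hn : (0 < n)%N) (a1 : oct F)
  (ha1 : a1 = one_oct F \/ a1 = e1 F)
  (b : 'I_n -> oct F) (hbM : forall i, inM (b i))
  (hdim : dim_alg_le1 b)
  (hS : S2_agree (fun i : 'I_n => if val i == 0%N then a1 else ozero F) b) :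
  forall c : 'I_n -> oct F,
    G2orbit (fun i : 'I_n => if val i == 0%N then a1 else ozero F) c <-> G2orbit b c.
Proof.
set a := (fun i : 'I_n => if val i == 0%N then a1 else ozero F) in hS *.
pose i0 := Ordinal hn.
have ha0 : a i0 = a1 by [].
have hai i : val i != 0%N -> a i = ozero F by move=> hi; rewrite /a (negPf hi).
case: hS => hN [hT _].
suff [g [ga hg]] : exists g, isAut g /\ b = (fun i => g (a i)).
  by rewrite hg; apply: orbit_eq.
have h2 : (1 + 1 : F) = 0 by have := GRing.pcharf0 hchar.
case: hdim => c hc.
have [t0 ht0] := hc _ (alg_gen b i0).
have [t1 ht1] := hc _ (alg_mul (alg_gen b i0) (alg_gen b i0)).
have hN0 := hN i0; have hT0 := hT i0; rewrite ha0 in hN0 hT0.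
have hone : onorm (one_oct F) = 1 by rewrite /onorm /one_oct /oadd /e1 /e2 /dot /=; ring.
have nz : otr (b i0) != 0 \/ onorm (b i0) != 0.
  case: ha1 => ha; rewrite ha in hN0 hT0; [right|left].
    by rewrite -hN0 hone oner_neq0.
  by rewrite -hT0 /otr /= addr0 oner_neq0.
have t0nz : t0 != 0.
  apply/eqP => t00; move: nz; rewrite ht0 otr_scale onorm_scale t00 mul0r expr0n mul0r eqxx.
  by case.
have hrel x t : x = oscale t c -> x = oscale (t / t0) (b i0).
  move=> ->; rewrite ht0; case: c {hc ht0 ht1} => a0 [a2 a3 a4] [a5 a6 a7] a8.
  by rewrite /oscale /v3scale /=; congr (Oct _ (V3 _ _ _) (V3 _ _ _) _); field; move: t0nz.
have hbi i : val i != 0%N -> b i = ozero F.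
  move=> hi; have [ti hti] := hc _ (alg_gen b i).
  have e := hrel _ _ hti; move: (hT i) (hN i); rewrite hai // e otr_scale onorm_scale.
  have -> : otr (ozero F) = 0 by rewrite /otr /= addr0.
  have -> : onorm (ozero F) = 0 by rewrite /onorm /dot /=; ring.
  move=> E1 E2; suff -> : ti / t0 = 0 by rewrite oscale0.
  case: nz => H.
    by apply/eqP; move/eqP: E1; rewrite eq_sym mulf_eq0 (negPf H) orbF.
  by apply/eqP; move/eqP: E2; rewrite eq_sym mulf_eq0 (negPf H) orbF expf_eq0.
suff [g [ga key]] : exists g, isAut g /\ g a1 = b i0.
  exists g; split => //; apply: functional_extensionality => i.
  case: (eqVneq (val i) 0%N) => hi.
    have -> : i = i0 by apply: val_inj.
    by rewrite ha0 key.
  by rewrite hbi // hai // aut0.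
have hsq := hrel _ _ ht1.
move: (hbM i0) hsq hN0 hT0 nz; case: (b i0) => [al [g p2 p3] [d q2 q3] be] /=.
case=> /= -> [-> [-> ->]] hsq hN0 hT0 nz.
case: ha1 => ha; rewrite ha in hN0 hT0 *.
- exists id; split; first by split => //; exists id.
  have hT1 : al + be = 1 + 1.
    by move: hT0; rewrite /otr /one_oct /oadd /e1 /e2 /= => <-; ring.
  rewrite h2 in hT1.
  have hN1 : al * be - g * d - 1 = 0.
    by rewrite -hone hN0 /onorm /dot /=; ring.
  have hbe : be = - al by apply: (eq_by (K:=1) hT1); ring.
  subst be.
  set l := t1 / t0 in hsq.
  have Eg := congr1 (fun z => x1 (ou z)) hsq.
  have Ed := congr1 (fun z => x1 (ov z)) hsq.
  have Ea := congr1 (@oal F) hsq.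
  rewrite /omul /oscale /v3scale /v3add /v3opp /cross /dot /= in Eg Ed Ea.
  have hg0 : l * g = 0 by rewrite -Eg; ring.
  have hd0 : l * d = 0 by rewrite -Ed; ring.
  have hla : l * al = -1 by rewrite -Ea; apply: (eq_by (K:=-1) hN1); ring.
  have lnz : l != 0.
    apply/eqP => l0; move: hla; rewrite l0 mul0r => /eqP.
    by rewrite eq_sym oppr_eq0 oner_eq0.
  move/eqP: hg0; rewrite mulf_eq0 (negPf lnz) /= => /eqP hg.
  move/eqP: hd0; rewrite mulf_eq0 (negPf lnz) /= => /eqP hd.
  subst g d.
  have : (al - 1) ^+ 2 = - (al * - al - 0 * 0 - 1) - (1 + 1) * al by ring.
  rewrite hN1 h2 (_ : - 0 - 0 * al = 0); last by ring.
  move/eqP; rewrite expf_eq0 /= subr_eq0 => /eqP hal.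
  subst al.
  rewrite /one_oct /oadd /e1 /e2 /v3add /=; congr (Oct _ (V3 _ _ _) (V3 _ _ _) _); try ring.
  by apply: (eq_by (K:=1) h2); ring.
- apply: key2.
    by move: hT0; rewrite /otr /= addr0 => <-.
  have -> : al * be - g * d = onorm (e1 F) by rewrite hN0 /onorm /dot /=; ring.
  by rewrite /onorm /dot /=; ring.
Qed.
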